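(* Let $\ell(z)=\log(1+\exp(-z))$. For a data point $z=(x,y)\in\mathbb{R}^d\times\{-1,+1\}$, a norm $\|\cdot\|$ on $\mathbb{R}^d$ and $c>0$, define $$R_z(w)=\max_{\|r\|\le c}\ell\big(y\,w^\top(x+r)\big)-\ell\big(y\,w^\top x\big),\qquad w\in\mathbb{R}^d.$$ Then $R_z$ is in general not convex: there exist $d$, $c>0$ and $z$ such that $R_z$ is not a convex function of $w$. *)

(* Defs.v *)
From HB Require Import structures.
From mathcomp Require Import all_boot all_order all_algebra.
From mathcomp Require Import all_classical all_reals all_analysis.
Set Implicit Arguments. Unset Strict Implicit. Unset Printing Implicit Defensive.
Import Order.TTheory GRing.Theory Num.Theory.
Local Open Scope ring_scope.
Local Open Scope classical_set_scope.

Definition logloss {R : realType} (z : R) : R := ln (1 + expR (- z)).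

Definition dotv {R : realType} {d : nat} (w x : 'rV[R]_d) : R :=
  \sum_(i < d) w ord0 i * x ord0 i.

Definition is_norm {R : realType} {d : nat} (N : 'rV[R]_d -> R) : Prop :=
  [/\ (forall x, N x = 0 -> x = 0),
      (forall (a : R) x, N (a *: x) = `|a| * N x) &
      (forall x y, N (x + y) <= N x + N y)].

(* R_z(w) = max_{N r <= c} l(y w^T (x + r)) - l(y w^T x); the maximum over the
   (compact) ball is attained, so it equals the supremum used here. *)
Definition Rz {R : realType} {d : nat} (N : 'rV[R]_d -> R) (c : R)
  (x : 'rV[R]_d) (y : R) (w : 'rV[R]_d) : R :=
  sup [set logloss (y * dotv w (x + r)) | r in [set r | N r <= c]]
  - logloss (y * dotv w x).

Definition convex_fun {R : realType} {d : nat} (f : 'rV[R]_d -> R) : Prop :=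
  forall (w1 w2 : 'rV[R]_d) (t : R), 0 <= t -> t <= 1 ->
    f (t *: w1 + (1 - t) *: w2) <= t * f w1 + (1 - t) * f w2.

(* Main.v *)
Require Import Defs.
From HB Require Import structures.
From mathcomp Require Import all_boot all_order all_algebra.
From mathcomp Require Import all_classical all_reals all_analysis.
From mathcomp Require Import ring lra.
Import Order.TTheory GRing.Theory Num.Theory.
Local Open Scope ring_scope.

Section Aux.
Variable R : realType.

Lemma dotv1 (w v : 'rV[R]_1) : dotv w v = w ord0 ord0 * v ord0 ord0.
Proof. by rewrite /dotv big_ord1. Qed.

Lemma logloss_le (z : R) : 0 <= z -> logloss z <= logloss 0.
Proof.
move=> hz; rewrite /logloss oppr0 expR0 ler_ln ?posrE.
- by rewrite lerD2l expR_le1 oppr_le0.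
- by rewrite ltr_wpDr ?expR_ge0.
- by rewrite ltr_wpDr.
Qed.

Lemma sup_eq (N : 'rV[R]_1 -> R) (hN : is_norm N) (w : 'rV[R]_1) :
  0 <= w ord0 ord0 ->
  sup [set logloss (1 * dotv w (const_mx 1 + r)) | r in
        [set r | N r <= N (const_mx 1)]] = logloss 0.
Proof.
case: hN => N0 Nh Nt hw.
set x : 'rV[R]_1 := const_mx 1.
have Nx0 : 0 <= N x.
  have h0 : N 0 = 0 by rewrite -(scale0r x) Nh normr0 mul0r.
  have := Nt x (- x); rewrite subrr h0 -scaleN1r Nh normrN normr1 mul1r.
  lra.
have ub : ubound [set logloss (1 * dotv w (x + r)) | r in
        [set r | N r <= N x]] (logloss 0).
  move=> _ [r hr <-]; apply: logloss_le.
  rewrite mul1r dotv1; apply: mulr_ge0 => //.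
  have er : r = r ord0 ord0 *: x by apply/rowP => i; rewrite ord1 !mxE mulr1.
  move: hr; rewrite /= er Nh !mxE.
  have Nxp : 0 < N x.
    rewrite lt_def Nx0 andbT; apply/eqP => /N0 /rowP /(_ ord0).
    by rewrite !mxE => /eqP; rewrite oner_eq0.
  rewrite ger_pMl // => /ler_normlP [h1 h2].
  lra.
apply/le_anti/andP; split.
  apply: ge_sup => //; exists (logloss (1 * dotv w (x + 0))), 0 => //=.
  have -> : (0 : 'rV[R]_1) = 0 *: x by rewrite scale0r.
  by rewrite Nh normr0 mul0r.
apply: ub_le_sup; first by exists (logloss 0).
exists (- x).
  by rewrite /= -scaleN1r Nh normrN normr1 mul1r.
by rewrite subrr dotv1 mxE mulr0 mulr0.
Qed.

End Aux.

Lemma key_ineq (R : realType) :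
  2 * logloss (1 : R) < logloss 0 + logloss 2.
Proof.
rewrite /logloss oppr0 expR0.
set a := expR (-1 : R).
have e2 : expR (- 2 : R) = a * a by rewrite /a -expRD; congr expR; lra.
have a0 : 0 < a by apply: expR_gt0.
have a1 : a < 1 by rewrite /a expR_lt1; lra.
rewrite e2 -lnM ?posrE; [|lra|nra].
rewrite (_ : 2 * ln (1 + a) = ln (1 + a) + ln (1 + a)); last lra.
rewrite -lnM ?posrE; [|lra|lra].
rewrite ltr_ln ?posrE; [nra|nra|nra].
Qed.

Theorem proposition5 (R : realType) :
  exists d : nat, forall N : 'rV[R]_d -> R, is_norm N ->
    exists (c : R) (x : 'rV[R]_d) (y : R),
      0 < c /\ (y = 1 \/ y = -1) /\ ~ convex_fun (Rz N c x y).
Proof.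
exists 1%N => N hN.
have Nxp : 0 < N (const_mx 1).
  case: hN => N0 Nh Nt.
  have Nx0 : 0 <= N (const_mx 1).
    have h0 : N 0 = 0 by rewrite -(scale0r (const_mx 1 : 'rV[R]_1)) Nh normr0 mul0r.
    have := Nt (const_mx 1) (- const_mx 1).
    rewrite subrr h0 -scaleN1r Nh normrN normr1 mul1r; lra.
  rewrite lt_def Nx0 andbT; apply/eqP => /N0 /rowP /(_ ord0).
  by rewrite !mxE => /eqP; rewrite oner_eq0.
exists (N (const_mx 1)), (const_mx 1), 1; split => //; split; first by left.
have eR : forall w : 'rV[R]_1, 0 <= w ord0 ord0 ->
    Rz N (N (const_mx 1)) (const_mx 1) 1 w = logloss 0 - logloss (w ord0 ord0).
  move=> w hw; rewrite /Rz sup_eq // mul1r dotv1 mxE mulr1 //.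
move=> /(_ 0 (2%:R *: const_mx 1) (1/2)).
rewrite !eR ?mxE ?mulr1 ?mulr0 ?add0r ?subrr; try lra.
have := key_ineq R.
rewrite (_ : (1 - 1 / 2) * 2 = 1 :> R); last lra.
move=> h1 h2; have := h2 ltac:(lra) ltac:(lra); lra.
Qed.
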